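(* Let $\mu=(\mu_1\geq\mu_2\geq\dots\geq\mu_k>\mu_{k+1}=0)$ be a partition, let $\bar{\mu}=(\bar\mu_1\ge\bar\mu_2\ge\cdots)$ be its conjugate partition, and let $y$ be an indeterminate. Then for every integer $\ell$ with $1\le \ell\le \mu_1$, $$ \frac{1}{\mu_1+y}\prod_{1\le i\le\bar{\mu}_{\ell}}\frac{\mu_i-i+1+y}{\mu_i-i+y}=\frac{1}{\ell-\bar{\mu}_{\ell}-1+y}\prod_{\ell\le j\le \mu_1}\frac{j-\bar{\mu}_j-1+y}{j-\bar{\mu}_j+y}$$ as rational functions in $y$.
   Context: For a partition $\mu$, the conjugate partition $\bar\mu$ is defined by: $\bar{\mu}_j$ is the number of indices $i$ with $\mu_i\ge j$ (the number of nodes in column $j$ of the Young diagram of $\mu$). *)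

(* Defs.v *)
From mathcomp Require Import all_boot all_order all_algebra.
From mathcomp Require Export fraction.
Set Implicit Arguments. Unset Strict Implicit. Unset Printing Implicit Defensive.

Definition is_partition (mu : seq nat) : bool :=
  sorted geq mu && (0 \notin mu).

(* 1-indexed part mu_i (equal to 0 for i > k). *)
Definition part (mu : seq nat) (i : nat) : nat := nth 0 mu i.-1.

Definition conj_part (mu : seq nat) (j : nat) : nat :=
  count (fun m => j <= m) mu.

Definition ratfun := {fraction {poly rat}}.
Definition yvar : ratfun := tofrac ('X : {poly rat}).

(* Main.v *)
Require Import Defs.
From mathcomp Require Import all_boot all_order all_algebra.
From mathcomp Require Import fraction.
From mathcomp Require Import ring zify.
Import GRing.Theory.
Local Open Scope ring_scope.

Definition F (z : int) : ratfun := z%:~R + yvar.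

Lemma F_neq0 z : F z != 0.
Proof.
rewrite /F /yvar -(rmorph_int (@tofrac _)) -tofracD tofrac_eq0 addrC.
rewrite -(rmorph_int (@polyC _)) -size_poly_eq0 size_XaddC //.
Qed.

Lemma key s j i : sorted geq s -> (0 < j)%N ->
  (j <= nth 0 s i)%N = (i < count (fun m => j <= m) s)%N.
Proof.
elim: s i => [|x s IH] i /= Hs Hj.
  by rewrite nth_nil ltn0; case: j Hj.
have Hs' : sorted geq s := path_sorted Hs.
have Hall : all (geq x) s.
  by apply: order_path_min Hs => a b c /= h1 h2; apply: leq_trans h2 h1.
case: (leqP j x) => Hjx.
  case: i => [|i] /=; first by rewrite Hjx add1n.
  by rewrite add1n ltnS; apply: IH.
have Hc : count (leq j) s = 0%N.
  apply/eqP; rewrite eqn0Ngt -has_count; apply/hasPn => y ys.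
  by rewrite -ltnNge; apply: leq_ltn_trans (allP Hall y ys) Hjx.
have Hf : (j <= x)%N = false by rewrite leqNgt Hjx.
rewrite Hc /=; case: i => [|i] //=.
by rewrite IH // Hc.
Qed.

Lemma Fnat (a b : nat) : (a%:R - b%:R + 1 + yvar : ratfun) = F (a%:Z - b%:Z + 1).
Proof. by rewrite /F !intrD intrN. Qed.
Lemma Fnat2 (a b : nat) : (a%:R - b%:R + yvar : ratfun) = F (a%:Z - b%:Z).
Proof. by rewrite /F !intrD intrN. Qed.
Lemma Fnat3 (a b : nat) : (a%:R - b%:R - 1 + yvar : ratfun) = F (a%:Z - b%:Z - 1).
Proof. by rewrite /F !intrD !intrN. Qed.
Lemma Fnat4 (a : nat) : (a%:R + yvar : ratfun) = F a%:Z.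
Proof. by []. Qed.

Lemma tele (a : int) (m n : nat) : (m <= n)%N ->
  \prod_(m <= i < n) (F (a - i%:Z + 1) / F (a - i%:Z)) = F (a - m%:Z + 1) / F (a - n%:Z + 1).
Proof.
elim: n => [|n IH]; first by rewrite leqn0 => /eqP ->; rewrite big_geq // divff // F_neq0.
rewrite leq_eqVlt => /orP [/eqP ->|]; first by rewrite big_geq // divff // F_neq0.
rewrite ltnS => Hmn; rewrite big_nat_recr //= IH //.
have -> : a - n.+1%:Z + 1 = a - n%:Z by rewrite -addn1 PoszD; ring.
by rewrite mulrA divfK // F_neq0.
Qed.

Lemma alg (K : fieldType) (v a b d e : K) : b != 0 -> e != 0 ->
  v * (a / b) * d = e * (d / b * (v * a / e)).
Proof. move=> hb he. field. by rewrite hb he. Qed.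

Lemma conj_key mu i j : is_partition mu -> (0 < i)%N -> (0 < j)%N ->
  (j <= part mu i)%N = (i <= conj_part mu j)%N.
Proof.
case/andP=> Hs _ Hi Hj; rewrite /part key //; by case: i Hi.
Qed.

Definition V mu l := \prod_(1 <= i < (conj_part mu l).+1)
  (F ((part mu i)%:Z - i%:Z + 1) / F ((part mu i)%:Z - i%:Z)).
Definition H mu l := \prod_(l <= j < (part mu 1).+1)
  (F (j%:Z - (conj_part mu j)%:Z - 1) / F (j%:Z - (conj_part mu j)%:Z)).

Lemma main mu n : is_partition mu -> (n <= part mu 1)%N ->
  V mu ((part mu 1).+1 - n) * F (((part mu 1).+1 - n)%N%:Z - 1 - (conj_part mu ((part mu 1).+1 - n))%:Z)
  = F (part mu 1)%:Z * H mu ((part mu 1).+1 - n).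
Proof.
move=> Hmu; set m := part mu 1. elim: n => [|n IH] Hn.
  rewrite subn0.
  have c0 : conj_part mu m.+1 = 0%N.
    apply/eqP; rewrite -leqn0 leqNgt -(conj_key _ _ _ Hmu) // /m ltnn //.
  rewrite /V /H c0 !big_geq // mul1r mulr1; congr F; lia.
have Hl : ((m.+1 - n) = (m - n).+1)%N by lia.
have Hl1 : (m.+1 - n.+1 = m - n)%N by lia.
move: (IH (ltnW Hn)); rewrite Hl Hl1; set l := (m - n)%N => IH'.
have l1 : (1 <= l)%N by lia.
have lm : (l <= m)%N by lia.
set c := conj_part mu l. set c1 := conj_part mu l.+1.
have cc : (c1 <= c)%N.
  case E: c1 => [|k] //. 
  have : (k.+1 <= c1)%N by rewrite E.
  rewrite -conj_key // => h. rewrite -conj_key //. exact: ltnW.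
have Vl : V mu l = V mu l.+1 * (F (l%:Z - c1%:Z) / F (l%:Z - c%:Z)).
  rewrite /V -/c -/c1 (big_cat_nat _ (n:=c1.+1)) //=.
  congr (_ * _).
  rewrite (eq_big_nat _ _ (F2 := fun i => F (l%:Z - i%:Z + 1) / F (l%:Z - i%:Z))).
    rewrite tele //. congr (F _ / F _); lia.
  move=> i /andP [i1 i2].
  have Ha : (l <= part mu i)%N by rewrite conj_key //; lia.
  have Hb : ~~ (l.+1 <= part mu i)%N by rewrite conj_key //; lia.
  have -> : part mu i = l by lia.
  done.
have Hlr : H mu l = F (l%:Z - c%:Z - 1) / F (l%:Z - c%:Z) * H mu l.+1.
  by rewrite /H big_ltn.
rewrite Vl Hlr.
have EH : H mu l.+1 = V mu l.+1 * F (l%:Z - c1%:Z) / F m%:Z.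
  apply: (mulfI (F_neq0 m%:Z)); rewrite -IH' [RHS]mulrC divfK ?F_neq0 //.
  congr (_ * F _); lia.
rewrite EH.
have -> : l%:Z - 1 - c%:Z = l%:Z - c%:Z - 1 by lia.
have := F_neq0 m%:Z. have := F_neq0 (l%:Z - c%:Z).
move=> h1 h2. set W := V mu l.+1. set E := F m%:Z. set B := F (l%:Z - c%:Z). exact: (@alg _ W (F (l%:Z - c1%:Z)) B (F (l%:Z - c%:Z - 1)) E h1 h2). Qed.

Lemma alg2 (K : fieldType) (v x e h : K) : x != 0 -> e != 0 ->
  v * x = e * h -> e^-1 * v = x^-1 * h.
Proof.
move=> hx he E; rewrite -(mulfK hx v) E. field. by rewrite hx he.
Qed.

Theorem lemma2p7 (mu : seq nat) (l : nat) :
  is_partition mu ->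
  (1 <= l <= part mu 1)%N ->
  (((part mu 1)%:R + yvar)^-1 *
     \prod_(1 <= i < (conj_part mu l).+1)
        (((part mu i)%:R - i%:R + 1 + yvar) / ((part mu i)%:R - i%:R + yvar))
   : ratfun)
  =
  (l%:R - (conj_part mu l)%:R - 1 + yvar)^-1 *
     \prod_(l <= j < (part mu 1).+1)
        ((j%:R - (conj_part mu j)%:R - 1 + yvar) / (j%:R - (conj_part mu j)%:R + yvar)).
Proof.
move=> Hmu /andP [l1 lm].
have hn : ((part mu 1).+1 - l <= part mu 1)%N by lia.
have := main _ _ Hmu hn.
have -> : ((part mu 1).+1 - ((part mu 1).+1 - l))%N = l by lia.
move=> E.
under eq_bigr do rewrite Fnat Fnat2.
under [in RHS]eq_bigr do rewrite Fnat3 Fnat2.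
rewrite Fnat3 Fnat4.
have E' : V mu l * F (l%:Z - (conj_part mu l)%:Z - 1) = F (part mu 1)%:Z * H mu l.
  by rewrite -E; congr (_ * F _); lia.
exact: (@alg2 _ (V mu l) (F (l%:Z - (conj_part mu l)%:Z - 1)) (F (part mu 1)%:Z) (H mu l) (F_neq0 _) (F_neq0 _) E').
Qed.
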